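(* There is no algorithm simulating $f(p)=2p$ on $\mathcal{P}=(0,1/2)$. More precisely: let $R_0$ be a random variable with a fixed law (not depending on $p$), and for $p\in(0,1/2)$ let $\mathbb{P}_p$ be the law under which $X_1,X_2,\dots$ are i.i.d. Bernoulli$(p)$ and independent of $R_0$. Let $T$ be a random time, finite $\mathbb{P}_p$-a.s. for every $p$, such that $\{T\le n\}\in\sigma(X_1,\dots,X_n,R_0)$ for every $n$, and let $S=S(X_1,\dots,X_T,R_0)$ be a measurable function (not depending on $p$) with $S\in[0,1]$. Then it is impossible that $\mathbb{E}_pS=2p$ for all $p\in(0,1/2)$.
   Context: By Lemma 1 (an $s$-coin exists iff an unbiased $[0,1]$-valued estimator of $s$ exists), the nonexistence of such an estimator $S$ is equivalent to the nonexistence of an algorithm producing a $2p$-coin from i.i.d. $p$-coins and independent auxiliary randomness. *)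

(* Defs.v *)
From HB Require Import structures.
From mathcomp Require Import all_boot all_order all_algebra.
From mathcomp Require Import all_classical all_reals all_analysis.
Set Implicit Arguments. Unset Strict Implicit. Unset Printing Implicit Defensive.
Import Order.TTheory GRing.Theory Num.Theory.
Local Open Scope classical_set_scope.
Local Open Scope ring_scope.

(* The auxiliary randomness R_0 is the identity on a
   probability space (Om, mu) (mu = the fixed law of R_0, not depending on p).

   A random time T with {T <= n} in sigma(X_1..X_n, R_0) is described by the
   family of events  stop w  (w : seq bool, of length n):
      {T = n} = U_{|w| = n} {(X_1..X_n) = w} x {R_0 in B_w}
   i.e.  T = n  iff  r is in  stop w  for w = (X_1..X_n) and in no
   stop (take k w), k < n  (first entrance).  Every set of
   sigma(X_1..X_n,R_0) has this form, so this describes every such T. *)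

Definition coin_weight {R : realType} (p : R) (w : seq bool) : R :=
  \prod_(b <- w) (if b then p else 1 - p).

(* T = size w and (X_1..X_T) = w, given R_0 = r and the coins starting with w *)
Definition exit_at {d} {Om : measurableType d}
    (stop : seq bool -> set Om) (w : seq bool) (r : Om) : bool :=
  (r \in stop w) && all (fun k => r \notin stop (take k w)) (iota 0 (size w)).

Definition stop_prob {R : realType} {d} {Om : measurableType d}
    (mu : probability Om R) (stop : seq bool -> set Om) (p : R) : \bar R :=
  (\int[mu]_r (\sum_(0 <= n <oo)
     (\sum_(t : n.-tuple bool)
        (if exit_at stop t r then coin_weight p t else 0))%:E))%E.

(* E_p S(X_1..X_T, R_0)  (on the event T < oo, which has full probability) *)
Definition expect_S {R : realType} {d} {Om : measurableType d}
    (mu : probability Om R) (stop : seq bool -> set Om)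
    (S : seq bool -> Om -> R) (p : R) : \bar R :=
  (\int[mu]_r (\sum_(0 <= n <oo)
     (\sum_(t : n.-tuple bool)
        (if exit_at stop t r then coin_weight p t * S t r else 0))%:E))%E.

(* Main.v *)
Require Import Defs.
From HB Require Import structures.
From mathcomp Require Import all_boot all_order all_algebra.
From mathcomp Require Import all_classical all_reals all_analysis.
From mathcomp Require Import measurable_realfun ring lra.
Import Order.TTheory GRing.Theory Num.Theory.
Local Open Scope classical_set_scope.
Local Open Scope ring_scope.
Section S.
Context (R : realType) (d : measure_display) (Om : measurableType d)
    (stop : seq bool -> set Om).
Hypothesis mstop : forall w, measurable (stop w).

Lemma mall (t : seq bool) (l : seq nat) :
  measurable [set r | all (fun k => r \notin stop (take k t)) l].
Proof.
elim: l => [|k l IH] /=.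
  by rewrite (_ : [set _ | true] = setT); [exact: measurableT|apply/seteqP; split].
rewrite (_ : [set _ | _] = ~` stop (take k t) `&` [set r | all (fun k => r \notin stop (take k t)) l]).
  by apply: measurableI => //; apply: measurableC.
apply/seteqP; split => r /=.
  by case/andP => /negP H1 H2; split => //; move=> H; apply: H1; rewrite inE.
by case=> H1 H2; apply/andP; split => //; apply/negP; rewrite inE.
Qed.

Lemma mexit (t : seq bool) : measurable_fun setT (exit_at stop t).
Proof.
apply: (measurable_fun_bool true); rewrite setTI.
rewrite (_ : _ @^-1` _ = stop t `&` [set r | all (fun k => r \notin stop (take k t)) (iota 0 (size t))]).
  by apply: measurableI => //; exact: mall.
apply/seteqP; split => r /=; rewrite /exit_at.
  by case/andP; rewrite inE.
by case=> H1 H2; apply/andP; split => //; rewrite inE.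
Qed.

Lemma mif (t : seq bool) (g : Om -> R) : measurable_fun setT g ->
  measurable_fun setT (fun r => if exit_at stop t r then g r else 0).
Proof.
move=> mg; apply: measurable_fun_ifT => //; first exact: mexit.
Qed.
End S.

Section T.
Context (R : realType) (d : measure_display) (Om : measurableType d)
    (mu : probability Om R) (stop : seq bool -> set Om)
    (S : seq bool -> Om -> R).
Hypothesis mstop : forall w, measurable (stop w).
Hypothesis mS : forall w, measurable_fun setT (S w).
Hypothesis S01 : forall w r, 0 <= S w r <= 1.

Lemma cw_ge0 (p : R) t : 0 <= p <= 1 -> 0 <= coin_weight p t.
Proof.
case/andP=> p0 p1; rewrite /coin_weight; apply: prodr_ge0 => b _.
by case: b => //; rewrite subr_ge0.
Qed.

Definition dd (p : R) n r := \sum_(t : n.-tuple bool)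
  (if exit_at stop t r then coin_weight p t * (1 - S t r) else 0).
Definition vv (p : R) n r := \sum_(t : n.-tuple bool)
  (if exit_at stop t r then coin_weight p t * S t r else 0).
Definition aa (t : seq bool) : \bar R :=
  (\int[mu]_r (if exit_at stop t r then 1 - S t r else 0)%:E)%E.

Lemma mdd p n : measurable_fun setT (fun r => (dd p n r)%:E : \bar R).
Proof.
apply/measurable_EFinP; apply: measurable_sum => t; apply: mif => //.
apply: measurable_funM; first exact: measurable_cst.
by apply: measurable_funB => //; exact: measurable_cst.
Qed.

Lemma mvv p n : measurable_fun setT (fun r => (vv p n r)%:E : \bar R).
Proof.
apply/measurable_EFinP; apply: measurable_sum => t; apply: mif => //.
by apply: measurable_funM => //; exact: measurable_cst.
Qed.

Lemma dd_ge0 p n r : 0 <= p <= 1 -> 0 <= dd p n r.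
Proof.
move=> hp; apply: sumr_ge0 => t _; case: ifP => // _.
by apply: mulr_ge0; [exact: cw_ge0|]; case/andP: (S01 t r) => _; rewrite subr_ge0.
Qed.

Lemma vv_ge0 p n r : 0 <= p <= 1 -> 0 <= vv p n r.
Proof.
move=> hp; apply: sumr_ge0 => t _; case: ifP => // _.
by apply: mulr_ge0; [exact: cw_ge0|]; case/andP: (S01 t r).
Qed.

Lemma split_prob p : 0 <= p <= 1 ->
  stop_prob mu stop p =
  (expect_S mu stop S p + \sum_(n <oo) \int[mu]_r (dd p n r)%:E)%E.
Proof.
move=> hp.
rewrite /stop_prob /expect_S.
rewrite (@integral_nneseries _ _ _ mu setT measurableT (fun n r => (vv p n r)%:E)); last 2 first.
- exact: mvv.
- by move=> n r _; rewrite lee_fin; exact: vv_ge0.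
rewrite -nneseriesD; last 2 first.
- by move=> i _ _; apply: integral_ge0 => r _; rewrite lee_fin; exact: vv_ge0.
- by move=> i _ _; apply: integral_ge0 => r _; rewrite lee_fin; exact: dd_ge0.
rewrite integral_nneseries //; last 2 first.
- move=> n; apply/measurable_EFinP; apply: measurable_sum => t; apply: mif => //.
- move=> n r _; rewrite lee_fin; apply: sumr_ge0 => t _; case: ifP => // _.
  exact: cw_ge0.
apply: eq_eseriesr => n _.
rewrite -ge0_integralD //; last 4 first.
- by move=> r _; rewrite lee_fin; exact: vv_ge0.
- exact: mvv.
- by move=> r _; rewrite lee_fin; exact: dd_ge0.
- exact: mdd.
apply: eq_integral => r _; rewrite -EFinD /vv /dd -big_split /=.
congr EFin; apply: eq_bigr => t _; case: ifP => _; last by rewrite addr0.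
by rewrite -mulrDr addrC subrK mulr1.
Qed.

Lemma int_dd p n : 0 <= p <= 1 ->
  (\int[mu]_r (dd p n r)%:E =
  \sum_(t : n.-tuple bool) (coin_weight p t)%:E * aa t)%E.
Proof.
move=> hp.
under eq_integral do rewrite /dd -sumEFin.
rewrite ge0_integral_sum //; last 2 first.
- move=> t; apply/measurable_EFinP; apply: mif => //.
  apply: measurable_funM; first exact: measurable_cst.
  by apply: measurable_funB => //; exact: measurable_cst.
- move=> t r _; rewrite lee_fin; case: ifP => // _.
  by apply: mulr_ge0; [exact: cw_ge0|]; case/andP: (S01 t r) => _; rewrite subr_ge0.
apply: eq_bigr => t _; rewrite /aa -ge0_integralZl //; last 3 first.
- apply/measurable_EFinP; apply: mif => //.
  by apply: measurable_funB => //; exact: measurable_cst.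
- move=> r _; rewrite lee_fin; case: ifP => // _.
  by case/andP: (S01 t r) => _; rewrite subr_ge0.
- by rewrite lee_fin; exact: cw_ge0.
apply: eq_integral => r _; rewrite -EFinM; congr EFin.
by case: ifP => _; rewrite ?mulr0.
Qed.


Lemma cw_lb (p : R) t : 4^-1 <= p <= 2^-1 -> (4^-1) ^+ size t <= coin_weight p t.
Proof.
case/andP=> p1 p2; elim: t => [|b t IH]; first by rewrite /coin_weight big_nil expr0.
rewrite /coin_weight big_cons /= exprS; apply: ler_pM => //.
case: b => //; lra.
Qed.

Lemma aa_ge0 t : (0 <= aa t)%E.
Proof.
apply: integral_ge0 => r _; rewrite lee_fin; case: ifP => // _.
by case/andP: (S01 t r) => _; rewrite subr_ge0.
Qed.

Lemma aa_le1 t : (aa t <= 1)%E.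
Proof.
apply: (@le_trans _ _ (\int[mu]_r (cst 1%:E) r)%E).
  apply: ge0_le_integral => //.
  - move=> r _; rewrite lee_fin; case: ifP => // _.
    by case/andP: (S01 t r) => _; rewrite subr_ge0.
  - apply/measurable_EFinP; apply: mif => //.
    by apply: measurable_funB => //; exact: measurable_cst.
  - move=> r _; rewrite lee_fin; case: ifP => // _.
    by case/andP: (S01 t r) => S0 _; rewrite lerBlDr lerDl.
by rewrite integral_cst // mul1e probability_le1.
Qed.

End T.

Arguments aa {R d Om}.
Arguments split_prob {R d Om}.
Arguments int_dd {R d Om}.
Arguments aa_ge0 {R d Om}.
Arguments aa_le1 {R d Om}.
Arguments cw_lb {R}.
Arguments cw_ge0 {R}.

Theorem corollary1 (R : realType) (d : measure_display) (Om : measurableType d)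
    (mu : probability Om R) (stop : seq bool -> set Om)
    (S : seq bool -> Om -> R) :
  (forall w, measurable (stop w)) ->
  (forall w, measurable_fun setT (S w)) ->
  (forall w r, 0 <= S w r <= 1) ->
  (forall p : R, 0 < p < 2^-1 -> stop_prob mu stop p = 1%E) ->
  ~ (forall p : R, 0 < p < 2^-1 -> expect_S mu stop S p = (2 * p)%:E).
Proof.
move=> mstop mS S01 H1 H2.
pose D p := (\sum_(n <oo) \sum_(t : n.-tuple bool) (coin_weight p t)%:E * aa mu stop S t)%E.
have key p : 0 < p < 2^-1 -> D p = (1 - 2 * p)%:E.
  move=> hp; have hp' : 0 <= p <= 1 by case/andP: hp => ? ?; apply/andP; split; lra.
  have := split_prob mu stop S mstop mS S01 _ hp'; rewrite H1 // H2 //.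
  rewrite (_ : (\sum_(n <oo) _)%E = D p); last first.
    by apply: eq_eseriesr => n _; rewrite (int_dd mu stop S mstop mS S01).
  case: (D p) => [x| |] //=; rewrite -EFinD => -[h]; congr EFin; by apply/eqP; rewrite eq_sym subr_eq addrC -h.
have [n [t0 t0nz]] : exists n (t0 : n.-tuple bool), aa mu stop S t0 != 0%E.
  apply/not_existsP => /= H.
  have hq : 0 < (4^-1 : R) < 2^-1 by apply/andP; split; lra.
  have := key _ hq; rewrite /D eseries0; last first.
    move=> i _ _; rewrite big1 // => t _.
    have := H i; move/forallNP => /(_ t) /negP; rewrite negbK => /eqP ->.
    by rewrite mule0.
  move=> [] /eqP; apply/negP; apply/eqP; lra.
have a0 := aa_ge0 mu stop S S01 t0.
have a1 := aa_le1 mu stop S mstop mS S01 t0.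
have afin : aa mu stop S t0 \is a fin_num.
  by rewrite ge0_fin_numE // (le_lt_trans a1) // ltry.
set alpha := fine (aa mu stop S t0).
have aE : aa mu stop S t0 = alpha%:E by rewrite fineK.
have al0 : 0 < alpha.
  rewrite lt_neqAle; apply/andP; split.
    by apply/eqP => al; move: t0nz; rewrite aE -al eqxx.
  by rewrite -lee_fin -aE.
have al1 : alpha <= 1 by rewrite -lee_fin -aE.
set q : R := (4^-1) ^+ n.
have q0 : 0 < q by rewrite exprn_gt0 // invr_gt0.
have q1 : q <= 1 by rewrite exprn_ile1 // ?invr_ge0 ?invf_le1 //; lra.
set c := q * alpha.
have c0 : 0 < c by rewrite mulr_gt0.
have c1 : c <= 1 by rewrite -(mulr1 1) ler_pM // ltW.
set p := 2^-1 - c / 4.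
have hp : 0 < p < 2^-1 by apply/andP; split; rewrite /p; lra.
have hp2 : 4^-1 <= p <= 2^-1 by apply/andP; split; rewrite /p; lra.
have hD : ((coin_weight p t0)%:E * aa mu stop S t0 <= D p)%E.
  have hT k : (0 <= \sum_(t : k.-tuple bool) (coin_weight p t)%:E * aa mu stop S t)%E.
    apply: sume_ge0 => t _; apply: mule_ge0; last exact: (aa_ge0 mu stop S S01).
    by rewrite lee_fin cw_ge0 //; apply/andP; split; lra.
  apply: le_trans (nneseries_lim_ge n.+1 _); last by move=> k _ _; exact: hT.
  rewrite big_nat_recr //=; apply: lee_paddl.
    by apply: sume_ge0 => k _; exact: hT.
  rewrite (bigD1 t0) //=; apply: lee_paddr => //.
  apply: sume_ge0 => t _; apply: mule_ge0; last exact: (aa_ge0 mu stop S S01).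
  by rewrite lee_fin cw_ge0 //; apply/andP; split; lra.
move: hD; rewrite key // aE -EFinM lee_fin => hD.
have hw : q <= coin_weight p t0 by have := cw_lb p t0 hp2; rewrite size_tuple.
have : c <= coin_weight p t0 * alpha by rewrite /c ler_pM // ltW.
rewrite /p in hD *; lra.
Qed.
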